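(* Let $\mathsf{M}$ be the subspace of $\ell_1$ with underlying set $\{x \in \prod_{i\in\mathbb{N}} M_i : \sum_{i\in\mathbb{N}} |x(i)| < \infty\}$, where $M_i = \{ j\cdot 2^{-i} \mid j \in \{0,\dots,2^i\}\}$. Then $\mathsf{M}$ is a Polish space that is not zero-dimensional and that does not satisfy Normann's condition.
   Context: $\ell_1$ is the set of real sequences $x$ with $\|x\|_1=\sum_{i}|x(i)|<\infty$, topologised by the metric $\|x-y\|_1$; $\mathsf{M}$ carries the subspace topology. A subset $A$ of a topological space $X$ is functionally closed if $A=\varphi^{-1}[\{0\}]$ for some continuous $\varphi\colon X\to[0,1]$. A space satisfies Normann's condition if every functionally closed subset is an intersection of clopen sets. *)

(* Defs.v *)
From HB Require Import structures.
From mathcomp Require Import all_boot all_order all_algebra.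
From mathcomp Require Import all_classical all_reals all_analysis.
Set Implicit Arguments. Unset Strict Implicit. Unset Printing Implicit Defensive.
Import Order.TTheory GRing.Theory Num.Theory numFieldNormedType.Exports.
Local Open Scope classical_set_scope.
Local Open Scope ring_scope.

Section Defs.
Variable R : realType.

Definition seqR := nat -> R.

Definition abs_summable (x : seqR) : Prop :=
  cvg (series (fun i => `|x i|) @ \oo).

Definition l1dist (x y : seqR) : R :=
  limn (series (fun i => `|x i - y i|)).

Definition Mi (i : nat) : set R :=
  [set r | exists j : nat, (j <= 2 ^ i)%N /\ r = j%:R / 2%:R ^+ i].

Definition Mset : set seqR :=
  [set x | (forall i, Mi i (x i)) /\ abs_summable x].

Definition open_in (S : set seqR) (d : seqR -> seqR -> R) (U : set seqR) :=
  U `<=` S /\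
  forall x, U x -> exists2 e : R, 0 < e & forall y, S y -> d x y < e -> U y.

Definition closed_in S d (A : set seqR) := A `<=` S /\ open_in S d (S `\` A).

Definition clopen_in S d (A : set seqR) := open_in S d A /\ closed_in S d A.

Definition metric_on (S : set seqR) (d : seqR -> seqR -> R) :=
  (forall x y, S x -> S y -> 0 <= d x y) /\
  (forall x y, S x -> S y -> d x y = 0 <-> x = y) /\
  (forall x y, S x -> S y -> d x y = d y x) /\
  (forall x y z, S x -> S y -> S z -> d x z <= d x y + d y z).

Definition complete_on (S : set seqR) (d : seqR -> seqR -> R) :=
  forall u : nat -> seqR, (forall n, S (u n)) ->
    (forall e : R, 0 < e -> exists N, forall m n, (N <= m)%N -> (N <= n)%N ->
       d (u m) (u n) < e) ->
    exists2 l, S l & forall e : R, 0 < e -> exists N, forall n, (N <= n)%N ->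
       d (u n) l < e.

Definition separable_in (S : set seqR) d :=
  exists2 D : set seqR, countable D /\ D `<=` S &
    forall U, open_in S d U -> U !=set0 -> (U `&` D) !=set0.

Definition completely_metrizable_in (S : set seqR) d :=
  exists d' : seqR -> seqR -> R, metric_on S d' /\ complete_on S d' /\
    forall U, open_in S d U <-> open_in S d' U.

Definition polish_in S d := separable_in S d /\ completely_metrizable_in S d.

Definition zero_dimensional_in S d :=
  forall U x, open_in S d U -> U x ->
    exists C, clopen_in S d C /\ C x /\ C `<=` U.

Definition continuous_on (S : set seqR) d (phi : seqR -> R) :=
  forall x, S x -> forall e : R, 0 < e ->
    exists2 delta : R, 0 < delta &
      forall y, S y -> d x y < delta -> `|phi y - phi x| < e.

Definition functionally_closed_in S d (A : set seqR) :=
  exists phi : seqR -> R, continuous_on S d phi /\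
    (forall x, S x -> 0 <= phi x <= 1) /\
    A = [set x | S x /\ phi x = 0].

(* Normann's condition: every functionally closed set is an intersection of
   clopen sets (the empty intersection being the whole space S) *)
Definition normann_condition_in S d :=
  forall A, functionally_closed_in S d A ->
    exists F : set (set seqR), (forall C, F C -> clopen_in S d C) /\
      A = S `&` \bigcap_(C in F) C.

End Defs.

(* Main.v *)
Require Import Defs.
From HB Require Import structures.
From mathcomp Require Import all_boot all_order all_algebra.
From mathcomp Require Import all_classical all_reals all_analysis.
From mathcomp Require Import lra.
Set Implicit Arguments. Unset Strict Implicit. Unset Printing Implicit Defensive.
Import Order.TTheory GRing.Theory Num.Theory numFieldNormedType.Exports.
Local Open Scope classical_set_scope.
Local Open Scope ring_scope.

Section S.
Variable R : realType.
Implicit Types a : nat -> R.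

Lemma series_nd a : (forall i, 0 <= a i) -> nondecreasing_seq (series a).
Proof. move=> a0; exact: nondecreasing_series. Qed.

Lemma L1 a : (forall i, 0 <= a i) -> cvgn (series a) -> forall n, series a n <= limn (series a).
Proof. by move=> a0 c; apply: nondecreasing_cvgn_le => //; exact: series_nd. Qed.

Lemma L2 a B : (forall i, 0 <= a i) -> (forall n, series a n <= B) ->
  cvgn (series a) /\ limn (series a) <= B.
Proof.
move=> a0 hB.
have c : cvgn (series a).
  apply: nondecreasing_is_cvgn; first exact: series_nd.
  by exists B => _ [n _ <-].
split=> //; apply: limr_le => //; exact: nearW.
Qed.

Lemma L3 a : cvgn (series a) -> forall e : R, 0 < e ->
  exists N, forall n, (N <= n)%N -> limn (series a) - series a n < e.
Proof.
move=> c e e0.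
have := (cvgrPdist_lt _ _).1 c e e0.
move=> [N _ HN]; exists N => n Nn.
have := HN n Nn; rewrite /= => h.
by apply: le_lt_trans h; exact: ler_norm.
Qed.
Notation d := (@l1dist R).
Implicit Types x y z : seqR R.

Lemma seriesE a n : series a n = \sum_(0 <= k < n) a k.
Proof. by []. Qed.

Lemma series_le a b n : (forall i, a i <= b i) -> series a n <= series b n.
Proof. by move=> h; rewrite !seriesE; apply: ler_sum => i _. Qed.

Lemma seriesD a b n : series (fun i => a i + b i) n = series a n + series b n.
Proof. by rewrite !seriesE big_split. Qed.

Lemma summ_diff x y : abs_summable x -> abs_summable y ->
  cvgn (series (fun i => `|x i - y i|)).
Proof.
move=> hx hy.
have := @L2 (fun i => `|x i - y i|)
  (limn (series (fun i => `|x i|)) + limn (series (fun i => `|y i|))) (fun i => normr_ge0 _).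
case=> // n; apply: (le_trans (series_le (b := fun i => `|x i| + `|y i|) _ _)).
  by move=> i; exact: ler_normB.
rewrite seriesD; apply: lerD; apply: L1 => //.
Qed.

Lemma part_le_d x y n : abs_summable x -> abs_summable y ->
  series (fun i => `|x i - y i|) n <= d x y.
Proof. by move=> hx hy; apply: L1 => //; exact: summ_diff. Qed.

Lemma d_le x y B : (forall n, series (fun i => `|x i - y i|) n <= B) -> d x y <= B.
Proof. by move=> h; case: (@L2 _ B (fun i => normr_ge0 _) h). Qed.

Lemma coord_le x y k : abs_summable x -> abs_summable y -> `|x k - y k| <= d x y.
Proof.
move=> hx hy; apply: le_trans (part_le_d k.+1 hx hy).
rewrite seriesE big_nat_recr //= lerDr; apply: sumr_ge0 => i _; exact: normr_ge0.
Qed.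

Lemma d_ge0 x y : abs_summable x -> abs_summable y -> 0 <= d x y.
Proof. by move=> hx hy; apply: le_trans (coord_le 0 hx hy). Qed.

Lemma d_sym x y : d x y = d y x.
Proof.
rewrite /l1dist (_ : series (fun i => `|x i - y i|) = series (fun i => `|y i - x i|)) //.
apply: funext => n; rewrite !seriesE.
by apply: eq_bigr => i _; rewrite distrC.
Qed.

Lemma d_tri x y z : abs_summable x -> abs_summable y -> abs_summable z ->
  d x z <= d x y + d y z.
Proof.
move=> hx hy hz; apply: d_le => n.
apply: (le_trans (series_le (b := fun i => `|x i - y i| + `|y i - z i|) _ _)).
  by move=> i; rewrite (_ : x i - z i = (x i - y i) + (y i - z i)) ?ler_normD //; rewrite addrA subrK.
by rewrite seriesD; apply: lerD; apply: part_le_d.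
Qed.

Lemma d_eq0 x y : abs_summable x -> abs_summable y -> d x y = 0 -> x = y.
Proof.
move=> hx hy h; apply: funext => k; apply/eqP; rewrite -subr_eq0 -normr_eq0.
by rewrite eq_le normr_ge0 andbT -h coord_le.
Qed.

Lemma d_refl x : d x x = 0.
Proof.
apply/eqP; rewrite eq_le; apply/andP; split.
  by apply: d_le => n; rewrite seriesE big1 // => i _; rewrite subrr normr0.
have := @L2 (fun i => `|x i - x i|) 0 (fun i => normr_ge0 _).
case=> [n|c _]; first by rewrite seriesE big1 // => i _; rewrite subrr normr0.
by apply: (le_trans _ (L1 (fun i => normr_ge0 _) c 0)); rewrite seriesE big_geq.
Qed.

Lemma summ_bound x B : (forall n, series (fun i => `|x i|) n <= B) -> abs_summable x.
Proof. by move=> h; case: (@L2 _ B (fun i => normr_ge0 _) h). Qed.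

Lemma summ_dom x y : abs_summable y -> (forall i, `|x i| <= `|y i|) -> abs_summable x.
Proof.
move=> hy h; apply: (@summ_bound _ (limn (series (fun i => `|y i|)))) => n.
apply: le_trans (series_le n h) _; exact: L1.
Qed.

Definition zero : seqR R := fun _ => 0.
Definition trunc n x : seqR R := fun i => if (i < n)%N then x i else 0.
Definition fs (s : seq nat) : seqR R :=
  fun i => (minn (nth 0%N s i) (2 ^ i))%:R / 2%:R ^+ i.

Lemma Mi0 i : Mi i (0 : R).
Proof. by exists 0%N; rewrite mul0r. Qed.

Lemma M_summ x : Mset x -> abs_summable x.
Proof. by case. Qed.

Lemma fin_supp_summ x N : (forall i, (N <= i)%N -> x i = 0) -> abs_summable x.
Proof.
move=> h; apply: (@summ_bound _ (series (fun i => `|x i|) N)) => K.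
elim: K => [|K IH]; first by rewrite seriesE big_geq // sumr_ge0.
case: (ltnP K N) => KN.
  by apply: (series_nd (fun i => normr_ge0 _)).
by rewrite seriesE big_nat_recr //= h // normr0 addr0.
Qed.

Lemma zero_M : Mset zero.
Proof. split; first by move=> i; exact: Mi0. by apply: (@fin_supp_summ _ 0). Qed.

Lemma trunc_M x n : Mset x -> Mset (trunc n x).
Proof.
move=> [hM _]; split.
  by move=> i; rewrite /trunc; case: ifP => _ //; exact: Mi0.
by apply: (@fin_supp_summ _ n) => i ni; rewrite /trunc ltnNge ni.
Qed.

Lemma fs_M s : Mset (fs s).
Proof.
split.
  by move=> i; exists (minn (nth 0%N s i) (2 ^ i)); rewrite geq_minr.
apply: (@fin_supp_summ _ (size s)) => i si.
by rewrite /fs nth_default // min0n mul0r.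
Qed.

Lemma tail x : abs_summable x -> forall e : R, 0 < e ->
  exists N, forall n, (N <= n)%N -> d x (trunc n x) < e.
Proof.
move=> hx e e0; have [N HN] := L3 hx e0; exists N => n Nn.
apply: le_lt_trans (HN n Nn); apply: d_le => K.
have L := L1 (fun i => normr_ge0 (x i)) hx.
have t0 : forall i, (i < n)%N -> `|x i - trunc n x i| = 0.
  by move=> i ilt; rewrite /trunc ilt subrr normr0.
case: (leqP K n) => Kn.
  rewrite (seriesE (fun i => `|x i - trunc n x i|)) big_nat big1 ?subr_ge0 // => i /andP[_ iK].
  by apply: t0; exact: leq_trans iK Kn.
rewrite (seriesE (fun i => `|x i - trunc n x i|)) (big_cat_nat (leq0n n) (ltnW Kn)) /= big_nat big1; last first.
  by move=> i /andP[_]; exact: t0.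
rewrite add0r (_ : \sum_(n <= i < K) `|x i - trunc n x i| = series (fun i => `|x i|) K - series (fun i => `|x i|) n).
  by rewrite lerD2r; exact: L.
rewrite !seriesE (big_cat_nat (leq0n n) (ltnW Kn)) /= addrAC subrr add0r.
apply: eq_big_nat => i /andP[ni _]; rewrite /trunc ltnNge ni /= subr0 //.
Qed.

Lemma trunc_fs x n : Mset x -> exists s, trunc n x = fs s.
Proof.
move=> [hM _]; have [J HJ] := choice hM.
exists (mkseq J n); apply: funext => i; rewrite /trunc /fs.
case: ifP => ilt.
  by rewrite nth_mkseq //; have [h1 ->] := HJ i; rewrite (minn_idPl h1).
rewrite nth_default ?min0n ?mul0r // size_mkseq leqNgt ilt //.
Qed.

Lemma separable_M : separable_in (@Mset R) d.
Proof.
exists (range fs).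
  split; last by move=> _ [s _ <-]; exact: fs_M.
  exact: (sub_countable (card_image_le fs setT) (countableP _)).
move=> U [US hU] [x Ux].
have xM := US x Ux; have [e e0 He] := hU x Ux.
have [N HN] := tail (M_summ xM) e0.
exists (trunc N x); split.
  by apply: He; [exact: trunc_M | exact: HN].
by have [s ->] := trunc_fs N xM; exists s.
Qed.
Lemma Mi_eq i (a b : R) : Mi i a -> Mi i b -> `|a - b| < (2%:R ^+ i)^-1 -> a = b.
Proof.
move=> [j [_ ->]] [k [_ ->]].
have p0 : (0 : R) < 2%:R ^+ i by apply: exprn_gt0.
have pi0 : (0 : R) < (2%:R ^+ i)^-1 by rewrite invr_gt0.
rewrite -mulrBl normrM (gtr0_norm pi0).
rewrite -[X in _ < X]mul1r ltr_pM2r ?invr_gt0 // => h.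
case: (ltngtP j k) => [jk|kj|->] //.
- have : (j.+1%:R : R) <= k%:R by rewrite ler_nat.
  rewrite -addn1 natrD => h2; have := ler_norm (k%:R - j%:R : R).
  rewrite distrC in h; have := ler_norm (j%:R - k%:R : R); lra.
- have : (k.+1%:R : R) <= j%:R by rewrite ler_nat.
  rewrite -addn1 natrD => h2; have := ler_norm (j%:R - k%:R : R); lra.
Qed.

Lemma le_sumN (N : nat -> nat) K i : (i < K)%N -> (N i <= \sum_(0 <= j < K) N j)%N.
Proof.
elim: K => // K IH; rewrite ltnS leq_eqVlt => /orP[/eqP ->|iK].
  by rewrite big_nat_recr //= leq_addl.
by rewrite big_nat_recr //=; apply: leq_trans (IH iK) (leq_addr _ _).
Qed.

Lemma complete_M : complete_on (@Mset R) d.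
Proof.
move=> u hu hC.
have hN : forall i, exists N, forall m n, (N <= m)%N -> (N <= n)%N ->
    d (u m) (u n) < (2%:R ^+ i)^-1.
  by move=> i; apply: hC; rewrite invr_gt0 exprn_gt0.
have [Nc HNc] := choice hN.
have eqc : forall i n, (Nc i <= n)%N -> u n i = u (Nc i) i.
  move=> i n h; apply: (Mi_eq ((hu n).1 i) ((hu (Nc i)).1 i)).
  apply: le_lt_trans (HNc i n (Nc i) h (leqnn _)).
  by apply: coord_le; apply: M_summ.
pose l : seqR R := fun i => u (Nc i) i.
have key : forall e : R, 0 < e -> exists N, forall n, (N <= n)%N -> forall K,
    series (fun i => `|u n i - l i|) K <= e.
  move=> e e0; have [N HN] := hC e e0; exists N => n Nn K.
  pose m := (N + \sum_(0 <= j < K) Nc j)%N.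
  have -> : series (fun i => `|u n i - l i|) K = series (fun i => `|u n i - u m i|) K.
    rewrite !seriesE; apply: eq_big_nat => i /andP[_ iK].
    by rewrite /l -(eqc i m) // /m; apply: leq_trans (le_sumN Nc iK) (leq_addl _ _).
  apply: ltW; apply: le_lt_trans (HN n m Nn (leq_addr _ _)).
  by apply: part_le_d; apply: M_summ.
have lM : Mset l.
  split; first by move=> i; exact: ((hu (Nc i)).1 i).
  have [N1 HN1] := key 1 ltr01.
  apply: (@summ_bound _ (limn (series (fun i => `|u N1 i|)) + 1)) => K.
  apply: (le_trans (series_le (b := fun i => `|u N1 i| + `|u N1 i - l i|) _ _)).
    move=> i; rewrite -{1}(subKr (u N1 i) (l i)) addrC.
    by apply: le_trans (ler_normD _ _) _; rewrite normrN addrC.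
  rewrite seriesD; apply: lerD; first by apply: L1 => //; exact: M_summ.
  exact: HN1.
exists l => // e e0.
have e2 : 0 < e / 2 by lra.
have [N HN] := key (e / 2) e2; exists N => n Nn.
apply: le_lt_trans (d_le (HN n Nn)) _; lra.
Qed.
Definition upd y n (j : nat) : seqR R :=
  fun i => if i == n then j%:R / 2%:R ^+ n else y i.
Definition Uh : set (seqR R) := [set x | Mset x /\ d zero x < 1 / 2].

Lemma pow_small (e : R) : 0 < e -> exists n0, forall n, (n0 <= n)%N ->
  (2%:R ^+ n : R)^-1 < e.
Proof.
move=> e0; exists (Num.Def.archi_bound e^-1) => n hn.
have p0 : (0 : R) < 2%:R ^+ n by apply: exprn_gt0.
rewrite invf_plt ?posrE //.
have ie : 0 <= e^-1 by rewrite invr_ge0 ltW.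
apply: (lt_le_trans (archi_boundP ie)).
rewrite -natrX ler_nat; by apply: leq_trans hn (ltnW (ltn_expl _ _)).
Qed.

Lemma frac_le1 n j : (j <= 2 ^ n)%N -> 0 <= (j%:R / 2%:R ^+ n : R) <= 1.
Proof.
move=> h; have p0 : (0 : R) < 2%:R ^+ n by apply: exprn_gt0.
apply/andP; split; first by rewrite divr_ge0 // ltW.
by rewrite ler_pdivrMr // mul1r -natrX ler_nat.
Qed.

Lemma single_le (t : nat -> R) n K : (forall i, i != n -> t i = 0) ->
  (forall i, 0 <= t i) -> series t K <= t n.
Proof.
move=> h0 hp.
suff : series t K <= if (n < K)%N then t n else 0.
  by case: ifP => // _ h; exact: le_trans h (hp n).
elim: K => [|K IH]; first by rewrite seriesE big_geq.
rewrite seriesE big_nat_recr //= -seriesE.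
case: (eqVneq K n) => [eKn|Kn].
  by move: IH; rewrite eKn ltnSn ltnn => IH; apply: le_trans (lerD IH (lexx _)) _; rewrite add0r.
rewrite h0 // addr0 ltnS leq_eqVlt eq_sym (negbTE Kn) /=; exact: IH.
Qed.

Lemma upd_M y n j : Mset y -> (j <= 2 ^ n)%N -> Mset (upd y n j).
Proof.
move=> [hM hs] hj; split.
  by move=> i; rewrite /upd; case: eqP => [->|_]; [exists j | exact: hM].
pose t i : R := if i == n then 1 else 0.
apply: (@summ_bound _ (limn (series (fun i => `|y i|)) + 1)) => K.
apply: (le_trans (series_le (b := fun i => `|y i| + t i) _ _)).
  move=> i; rewrite /upd /t; case: eqP => _; last by rewrite addr0.
  have /andP[a b] := frac_le1 hj; rewrite ger0_norm //.
  apply: le_trans b _; rewrite lerDr; exact: normr_ge0.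
rewrite seriesD; apply: lerD; first exact: L1.
have -> : 1 = t n by rewrite /t eqxx.
apply: single_le => i; rewrite /t; first by move/negbTE ->.
by case: ifP.
Qed.

Lemma d_upd y n j : d (upd y n j) (upd y n j.+1) <= (2%:R ^+ n)^-1.
Proof.
apply: d_le => K.
set t := fun i => _.
have -> : (2%:R ^+ n : R)^-1 = t n.
  rewrite /t /upd eqxx -mulrBl normrM distrC -natrB ?leqnSn // subSnn normr1 mul1r.
  by rewrite ger0_norm // invr_ge0 exprn_ge0.
apply: single_le => i; rewrite /t /upd; last by exact: normr_ge0.
by move/negbTE ->; rewrite subrr normr0.
Qed.

Lemma dIVT (P : nat -> Prop) m : P 0%N -> ~ P m ->
  exists j, (j < m)%N /\ P j /\ ~ P j.+1.
Proof.
elim: m => [//|m IH] P0 Pm.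
case: (pselect (P m)) => h; first by exists m.
by have [j [jm [a b]]] := IH P0 h; exists j; split => //; exact: ltnW.
Qed.

Lemma d_zero_coord x k : Mset x -> `|x k| <= d zero x.
Proof.
move=> hx; have := coord_le k (M_summ zero_M) (M_summ hx).
by rewrite /zero sub0r normrN.
Qed.
Lemma upd_top y n : Mset y -> ~ Uh (upd y n (2 ^ n)).
Proof.
move=> hy [hM h].
have e1 : upd y n (2 ^ n) n = 1.
  by rewrite /upd eqxx natrX divff // expf_neq0 // pnatr_eq0.
have := d_zero_coord n hM; rewrite e1 normr1; lra.
Qed.

Lemma upd0 y n : y n = 0 -> upd y n 0 = y.
Proof.
by move=> h; apply: funext => i; rewrite /upd mul0r; case: eqP => // ->.
Qed.

Lemma no_clopen : ~ exists C, clopen_in (@Mset R) d C /\ C zero /\ C `<=` Uh.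
Proof.
move=> [C [[[CM Copen] [_ [_ Cclosed]]] [C0 CU]]].
have step : forall p : nat * seqR R, exists j : nat,
   Mset p.2 -> C p.2 -> p.2 p.1 = 0 ->
   (j < 2 ^ p.1)%N /\ C (upd p.2 p.1 j) /\ ~ C (upd p.2 p.1 j.+1).
  move=> [n y] /=.
  case: (pselect (Mset y /\ C y /\ y n = 0)) => [[hy [Cy yn]]|h]; last first.
    by exists 0%N => a b c; exfalso; apply: h.
  have C0' : C (upd y n 0) by rewrite upd0.
  have [j [a [b c]]] := @dIVT (fun j => C (upd y n j)) (2 ^ n) C0'
    (fun hC => @upd_top y n hy (CU _ hC)).
  by exists j.
have [J HJ] := choice step.
pose X := fix X (n : nat) : seqR R :=
  match n with 0%N => zero | n'.+1 => upd (X n') n' (J (n', X n')) end.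
have XS : forall n, X n.+1 = upd (X n) n (J (n, X n)) by [].
have inv : forall n, Mset (X n) /\ C (X n) /\ forall i, (n <= i)%N -> X n i = 0.
  elim=> [|n [hM [hC hz]]]; first by split; [exact: zero_M | split].
  have [a [b _]] := HJ (n, X n) hM hC (hz n (leqnn n)).
  rewrite XS; split; first by apply: upd_M => //; exact: ltnW.
  split => // i ni; rewrite /upd.
  by case: eqP => [ein|_]; [move: ni; rewrite ein ltnn | apply: hz; exact: ltnW].
pose x : seqR R := fun i => X i.+1 i.
have Xtr : forall n, X n = trunc n x.
  elim=> [|n IH]; first by apply: funext => i.
  apply: funext => i; rewrite XS /trunc /x.
  case: (eqVneq i n) => [->|ni]; first by rewrite ltnSn XS.
  rewrite /upd; case: eqP => [e|_]; first by move: ni; rewrite e eqxx.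
  rewrite IH /trunc ltnS; case: (ltngtP i n) => h.
  - by [].
  - by [].
  - by move/eqP: ni.
have xM : Mset x.
  split; first by move=> i; exact: ((inv i.+1).1.1 i).
  apply: (@summ_bound _ (1 / 2)) => K.
  have [hM [hC _]] := inv K.
  apply: ltW; apply: le_lt_trans (CU _ hC).2.
  apply: le_trans (part_le_d K (M_summ zero_M) (M_summ hM)).
  rewrite !seriesE le_eqVlt; apply/orP; left; apply/eqP.
  apply: eq_big_nat => i /andP[_ iK].
  by rewrite Xtr /trunc iK /zero sub0r normrN.
have xC : C x.
  apply: contrapT => nxC.
  have [e e0 He] := Cclosed x (conj xM nxC).
  have [N HN] := tail (M_summ xM) e0.
  have [_ []] := He _ (trunc_M N xM) (HN N (leqnn N)).
  by rewrite -Xtr; exact: (inv N).2.1.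
have [e e0 He] := Copen x xC.
have e2 : 0 < e / 2 by lra.
have [N HN] := tail (M_summ xM) e2.
have [n0 Hn0] := pow_small e2.
pose n := maxn N n0.
have [hM [hC hz]] := inv n.
have [a [b c]] := HJ (n, X n) hM hC (hz n (leqnn n)).
apply: c; apply: He; first by apply: upd_M.
have h1 : d x (X n.+1) < e / 2.
  by rewrite Xtr; apply: HN; apply: leq_trans (leq_maxl N n0) (leqnSn _).
have h2 : d (X n.+1) (upd (X n) n (J (n, X n)).+1) < e / 2.
  rewrite XS; apply: le_lt_trans (d_upd _ _ _) _; apply: Hn0; exact: leq_maxr.
have := d_tri (M_summ xM) (M_summ (inv n.+1).1) (M_summ (upd_M hM a)).
lra.
Qed.
Lemma Uh_open : open_in (@Mset R) d Uh.
Proof.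
split; first by move=> x [].
move=> x [xM hx]; exists (1 / 2 - d zero x); first lra.
move=> y yM hxy; split => //.
have := d_tri (M_summ zero_M) (M_summ xM) (M_summ yM); lra.
Qed.

Lemma Uh0 : Uh zero.
Proof. split; first exact: zero_M. rewrite d_refl; lra. Qed.

Lemma mx0 (a : R) : (Num.max 0 a = 0 /\ a <= 0) \/ (Num.max 0 a = a /\ 0 <= a).
Proof.
case: (leP a 0) => h; first by left; split => //; exact: max_l.
by right; split => //; exact: ltW.
Qed.

Definition phi (x : seqR R) : R := Num.max 0 (1 / 2 - d zero x).

Lemma no_normann : ~ normann_condition_in (@Mset R) d.
Proof.
move=> Nc.
pose A := [set x | Mset x /\ phi x = 0].
have fcA : functionally_closed_in (@Mset R) d A.
  exists phi; split; last split => //.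
    move=> x xM e e0; exists e => // y yM hxy.
    have t1 := d_tri (M_summ zero_M) (M_summ xM) (M_summ yM).
    have t2 := d_tri (M_summ zero_M) (M_summ yM) (M_summ xM).
    rewrite (d_sym y x) in t2.
    rewrite ltr_norml /phi.
    case: (mx0 (1 / 2 - d zero x)) => [[-> ?]|[-> ?]];
    case: (mx0 (1 / 2 - d zero y)) => [[-> ?]|[-> ?]]; apply/andP; split; lra.
  move=> x xM; have := d_ge0 (M_summ zero_M) (M_summ xM); rewrite /phi => h.
  case: (mx0 (1 / 2 - d zero x)) => [[-> ?]|[-> ?]]; apply/andP; split; lra.
have [F [hF eqA]] := Nc A fcA.
have nA0 : ~ A zero.
  move=> [_]; rewrite /phi d_refl.
  case: (mx0 (1 / 2 - 0)) => [[-> ?]|[-> ?]]; lra.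
have [C [FC nC0]] : exists C, F C /\ ~ C zero.
  apply: contrapT => h; apply: nA0; rewrite eqA; split; first exact: zero_M.
  move=> C FC; apply: contrapT => nC; apply: h; by exists C.
have [[CM _] [_ Cop]] := hF C FC.
apply: no_clopen; exists (@Mset R `\` C); split; last split.
- split; first exact: Cop.
  split; first by move=> x [].
  rewrite setDD setIidr //; exact: (hF C FC).1.
- by split; [exact: zero_M|].
- move=> y [yM nCy]; split => //.
  rewrite ltNge; apply/negP => hy; apply: nCy.
  have : A y.
    split => //; rewrite /phi.
    case: (mx0 (1 / 2 - d zero y)) => [[-> ?]|[-> ?]] //; lra.
  by rewrite eqA => -[_]; apply.
Qed.
End S.

Theorem lemma2p3 (R : realType) :
  polish_in (@Mset R) (@l1dist R) /\
  ~ zero_dimensional_in (@Mset R) (@l1dist R) /\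
  ~ normann_condition_in (@Mset R) (@l1dist R).
Proof.
split; last split.
- split; first exact: separable_M.
  exists (@l1dist R); split; last split; last by [].
    split; first by move=> x y hx hy; apply: d_ge0; exact: M_summ.
    split; first by move=> x y hx hy; split; [apply: d_eq0; exact: M_summ | move=> ->; exact: d_refl].
    split; first by move=> x y _ _; exact: d_sym.
    by move=> x y z hx hy hz; apply: d_tri; exact: M_summ.
  exact: complete_M.
- move=> Z; have [C [hC [C0 CU]]] := Z _ _ (@Uh_open R) (@Uh0 R).
  by apply: (@no_clopen R); exists C.
- exact: no_normann.
Qed.
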